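(* Let $f\in C^{1,1}_L(\mathbb{R}^n)$. For all $(u_1,u_2)\in\mathbb{R}^n\times\mathbb{R}^n$ and every matrix $H\in\mathbb{R}^{n\times n}$, $$\psi(u_1,u_2,H):=f(u_1)-f(u_2)-\tfrac{1}{2L}\langle (LI-H)(u_1-u_2),\nabla f(u_1)\rangle-\tfrac{1}{2L}\langle (LI+H)(u_1-u_2),\nabla f(u_2)\rangle-\tfrac{1}{4L}\|H(u_1-u_2)\|^2-\tfrac{L}{4}\|u_1-u_2\|^2\le 0 .$$
   Context: Let $L>0$. $C^{1,1}_L(\mathbb{R}^n)$ denotes the set of differentiable functions $f:\mathbb{R}^n\to\mathbb{R}$ with $\|\nabla f(u_1)-\nabla f(u_2)\|\le L\|u_1-u_2\|$ for all $u_1,u_2\in\mathbb{R}^n$ (Euclidean norm). *)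

(* Defs.v *)
From HB Require Import structures.
From mathcomp Require Import all_boot all_order all_algebra.
From mathcomp Require Import all_classical all_reals all_analysis.
Set Implicit Arguments. Unset Strict Implicit. Unset Printing Implicit Defensive.
Import Order.TTheory GRing.Theory Num.Theory.
Import numFieldNormedType.Exports.
Local Open Scope ring_scope.

Definition dotv {R : realType} {n : nat} (u v : 'rV[R]_n) : R :=
  \sum_(i < n) u ord0 i * v ord0 i.
Definition enorm {R : realType} {n : nat} (u : 'rV[R]_n) : R :=
  Num.sqrt (dotv u u).

(* Gradient: the vector of partial derivatives, i.e. the Riesz representative
   of the Frechet differential 'd f u w.r.t. the Euclidean inner product. *)
Definition grad {R : realType} {n : nat} (f : 'rV[R]_n -> R) (u : 'rV[R]_n)
  : 'rV[R]_n := \row_(i < n) ('d f u) (delta_mx ord0 i).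

(* Matrix-vector product H x (x viewed as a column vector). *)
Definition mxapp {R : realType} {n : nat} (H : 'M[R]_n) (x : 'rV[R]_n)
  : 'rV[R]_n := x *m H^T.

Definition C11 {R : realType} {n : nat} (L : R) (f : 'rV[R]_n -> R) : Prop :=
  (forall u, differentiable f u) /\
  (forall u1 u2, enorm (grad f u1 - grad f u2) <= L * enorm (u1 - u2)).

(* Main.v *)
Require Import Defs.
From HB Require Import structures.
From mathcomp Require Import all_boot all_order all_algebra.
From mathcomp Require Import all_classical all_reals all_analysis.
From mathcomp Require Import ring lra.
Import Order.TTheory GRing.Theory Num.Theory.
Import numFieldNormedType.Exports.
Local Open Scope ring_scope.
Section Dot.
Variables (R : realType) (n : nat).
Implicit Types (a b c : 'rV[R]_n) (k : R).

Lemma dotvC a b : dotv a b = dotv b a.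
Proof. by apply: eq_bigr => i _; rewrite mulrC. Qed.
Lemma dotvDl a b c : dotv (a + b) c = dotv a c + dotv b c.
Proof. by rewrite /dotv -big_split; apply: eq_bigr => i _; rewrite !mxE mulrDl. Qed.
Lemma dotvNl a c : dotv (- a) c = - dotv a c.
Proof. by rewrite /dotv -sumrN; apply: eq_bigr => i _; rewrite !mxE mulNr. Qed.
Lemma dotvBl a b c : dotv (a - b) c = dotv a c - dotv b c.
Proof. by rewrite dotvDl dotvNl. Qed.
Lemma dotvZl k a c : dotv (k *: a) c = k * dotv a c.
Proof. by rewrite /dotv mulr_sumr; apply: eq_bigr => i _; rewrite !mxE mulrA. Qed.
Lemma dotvDr a b c : dotv c (a + b) = dotv c a + dotv c b.
Proof. by rewrite dotvC dotvDl !(dotvC c). Qed.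
Lemma dotvBr a b c : dotv c (a - b) = dotv c a - dotv c b.
Proof. by rewrite dotvC dotvBl !(dotvC c). Qed.
Lemma dotvNr a c : dotv c (- a) = - dotv c a.
Proof. by rewrite dotvC dotvNl dotvC. Qed.
Lemma dotvZr k a c : dotv c (k *: a) = k * dotv c a.
Proof. by rewrite dotvC dotvZl dotvC. Qed.
Lemma dotv_ge0 a : 0 <= dotv a a.
Proof. by apply: sumr_ge0 => i _; rewrite -expr2 sqr_ge0. Qed.
Lemma enorm_sq a : enorm a ^+ 2 = dotv a a.
Proof. by rewrite /enorm sqr_sqrtr // dotv_ge0. Qed.
End Dot.
Arguments dotvC {R n}. Arguments dotvDl {R n}. Arguments dotvNl {R n}.
Arguments dotvBl {R n}. Arguments dotvZl {R n}. Arguments dotvDr {R n}.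
Arguments dotvBr {R n}. Arguments dotvNr {R n}. Arguments dotvZr {R n}. Arguments dotv_ge0 {R n}.
Arguments enorm_sq {R n}.

Lemma sq_expand (R : realType) (n : nat) (a b : 'rV[R]_n) (al be : R) :
  dotv (al *: a - be *: b) (al *: a - be *: b) =
  al * (al * dotv a a) - al * (be * dotv a b) - (be * (al * dotv a b) - be * (be * dotv b b)).
Proof. by rewrite dotvBl !dotvBr !dotvZl !dotvZr (dotvC b a). Qed.

Lemma grad_dot (R : realType) (n : nat) (f : 'rV[R]_n -> R) u v :
  'd f u v = dotv (grad f u) v.
Proof.
rewrite [v in LHS]row_sum_delta linear_sum /dotv.
apply: eq_bigr => i _; rewrite linearZ /= mxE mulrC.
by [].
Qed.
Lemma line_der (R : realType) (n : nat) (f : 'rV[R]_n -> R) (x d : 'rV[R]_n) (t : R) :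
  (forall u, differentiable f u) ->
  is_derive t 1 (fun s : R => f (x + s *: d)) ('d f (x + t *: d) d).
Proof.
move=> df.
have G : is_diff t (cst x + ( *:%R^~ d) : R -> 'rV[R]_n) (0 + ( *:%R^~ d)).
  exact: is_diffD.
have F : is_diff (x + t *: d) f ('d f (x + t *: d)).
  by apply: DiffDef.
have C := @is_diff_comp _ _ _ _ _ _ _ _ t G F.
have -> : (fun s : R => f (x + s *: d)) = f \o (cst x + ( *:%R^~ d)) by [].
apply: DeriveDef; first exact: diff_derivable.
rewrite deriveE // diff_val /= add0r scale1r //.
Qed.

Lemma aux (R : realFieldType) (L t s W X D : R) : 0 < L -> 0 < t -> s ^+ 2 = 1 ->
  W <= L ^+ 2 * (t ^+ 2 * D) ->
  0 <= s * (s * W) - s * (L * t * X) - (L * t * (s * X) - L * t * (L * t * D)) ->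
  s * X <= L * t * D.
Proof.
move=> L0 t0 s2 hW; rewrite mulrA -expr2 s2 mul1r => hS.
have : (L * t) * (s * X) <= (L * t) * (L * t * D) by lra.
by rewrite ler_pM2l // mulr_gt0.
Qed.

Arguments aux {R}.
Lemma descent (R : realType) (n : nat) (L : R) (f : 'rV[R]_n -> R) (x y : 'rV[R]_n) (s : R) :
  C11 L f -> 0 < L -> s ^+ 2 = 1 ->
  s * (f y - f x - dotv (grad f x) (y - x)) <= L / 2 * dotv (y - x) (y - x).
Proof.
move=> [df lip] L0 s2.
set d := y - x; set D := dotv d d; set c := dotv (grad f x) d.
have hd : forall t : R, is_derive t 1 (fun u : R => s * f (x + u *: d) - s * c * u - L / 2 * D * u ^+ 2)
   (s * 'd f (x + t *: d) d - s * c - L / 2 * D * (2 * t)).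
  move=> t.
  have h1 := is_deriveZ s (@line_der R n f x d t df).
  have h2 := is_deriveZ (s * c) (@is_derive_id _ _ t 1).
  have h3 := is_deriveZ (L / 2 * D) (@is_deriveX _ _ id 2 t 1 1 (@is_derive_id _ _ t 1)).
  have h := is_deriveB (is_deriveB h1 h2) h3.
  apply: is_derive_eq.
  by rewrite /GRing.scale /= !mulr1 expr1.
set phi := (fun u : R => s * f (x + u *: d) - s * c * u - L / 2 * D * u ^+ 2) in hd.
have dphi : forall t, derivable phi t 1 by move=> t; exact: @ex_derive _ _ _ _ _ _ _ (hd t).
have key : phi 1 <= phi 0.
  apply: (@ler0_derive1_nincr R phi 0 1 (fun t _ => dphi t) _
     (derivable_within_continuous (fun t _ => dphi t))) => //.
  move=> t; rewrite in_itv /= => /andP [t0 t1].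
  rewrite derive1E (@derive_val _ _ _ _ _ _ _ (hd t)) grad_dot.
  set w := grad f (x + t *: d) - grad f x.
  have e1 : dotv (grad f (x + t *: d)) d = dotv w d + c by rewrite /w dotvBl /c subrK.
  have hw := lip (x + t *: d) x.
  rewrite -/w (_ : x + t *: d - x = t *: d) ?(addrC x) ?addrK // in hw.
  have W1 : dotv w w <= L ^+ 2 * (t ^+ 2 * D).
    have h0 : 0 <= enorm w by exact: sqrtr_ge0.
    have := ler_pM h0 h0 hw hw.
    have -> : L * enorm (t *: d) * (L * enorm (t *: d)) = L ^+ 2 * enorm (t *: d) ^+ 2 by ring.
    have -> : enorm w * enorm w = enorm w ^+ 2 by ring.
    by rewrite !enorm_sq dotvZl dotvZr !expr2 -!mulrA.
  have S := dotv_ge0 (s *: w - (L * t) *: d : 'rV[R]_n).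
  rewrite sq_expand -/D in S.
  rewrite e1.
  have := aux _ _ _ _ _ _ L0 t0 s2 W1 S.
  lra.
have xd : x + d = y by rewrite /d addrC subrK.
move: key; rewrite /phi scale0r scale1r addr0 xd expr1n expr0n /= => key.
lra.
Qed.
Lemma keyK (R : realType) (n : nat) (L : R) (d g1 g2 v p : 'rV[R]_n) : 0 < L ->
  p = 2^-1 *: d + (2 * L)^-1 *: (g1 - g2) ->
  dotv g2 p - dotv g1 (p - d) + L / 2 * dotv p p + L / 2 * dotv (p - d) (p - d)
  - (2 * L)^-1 * (L * dotv d g1 - dotv v g1) - (2 * L)^-1 * (L * dotv d g2 + dotv v g2)
  - (4 * L)^-1 * dotv v v - L / 4 * dotv d d <= 0.
Proof.
move=> L0 hp.
have S := dotv_ge0 (v - (g1 - g2)).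
have L0' : L != 0 by rewrite gt_eqF.
suff -> : dotv g2 p - dotv g1 (p - d) + L / 2 * dotv p p + L / 2 * dotv (p - d) (p - d)
  - (2 * L)^-1 * (L * dotv d g1 - dotv v g1) - (2 * L)^-1 * (L * dotv d g2 + dotv v g2)
  - (4 * L)^-1 * dotv v v - L / 4 * dotv d d = - ((4 * L)^-1 * dotv (v - (g1 - g2)) (v - (g1 - g2))).
  by rewrite oppr_le0 mulr_ge0 // invr_ge0 mulr_ge0 // ltW.
rewrite hp !(dotvDl, dotvDr, dotvNl, dotvNr, dotvZl, dotvZr).
rewrite ?(dotvC g1 d) ?(dotvC g2 d) ?(dotvC v d) ?(dotvC g2 g1) ?(dotvC v g1) ?(dotvC v g2).
field.
by rewrite L0'.
Qed.

Lemma dot_mxappB (R : realType) (n : nat) (L : R) (H : 'M[R]_n) (d g : 'rV[R]_n) :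
  dotv (mxapp (L%:M - H) d) g = L * dotv d g - dotv (mxapp H d) g.
Proof.
have -> : mxapp (L%:M - H) d = L *: d - mxapp H d.
  by rewrite /mxapp linearB /= tr_scalar_mx mulmxBr mul_mx_scalar.
by rewrite dotvBl dotvZl.
Qed.

Lemma dot_mxappD (R : realType) (n : nat) (L : R) (H : 'M[R]_n) (d g : 'rV[R]_n) :
  dotv (mxapp (L%:M + H) d) g = L * dotv d g + dotv (mxapp H d) g.
Proof.
have -> : mxapp (L%:M + H) d = L *: d + mxapp H d.
  by rewrite /mxapp linearD /= tr_scalar_mx mulmxDr mul_mx_scalar.
by rewrite dotvDl dotvZl.
Qed.

Lemma finarith (R : realFieldType) (L F1 F2 Fz a2p a1pd P Q X1 V1 X2 V2 VV DD : R) :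
  1 * (Fz - F2 - a2p) <= L / 2 * P ->
  -1 * (Fz - F1 - a1pd) <= L / 2 * Q ->
  a2p - a1pd + L / 2 * P + L / 2 * Q - (2 * L)^-1 * (L * X1 - V1)
    - (2 * L)^-1 * (L * X2 + V2) - (4 * L)^-1 * VV - L / 4 * DD <= 0 ->
  F1 - F2 - (2 * L)^-1 * (L * X1 - V1) - (2 * L)^-1 * (L * X2 + V2)
    - (4 * L)^-1 * VV - L / 4 * DD <= 0.
Proof. move=> A B K; lra. Qed.
Arguments finarith {R L F1 F2 Fz a2p a1pd P Q X1 V1 X2 V2 VV DD}.

Theorem lemma4p4 (R : realType) (n : nat) (L : R) (hL : 0 < L)
  (f : 'rV[R]_n -> R) (hf : C11 L f)
  (u1 u2 : 'rV[R]_n) (H : 'M[R]_n) :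
  f u1 - f u2
  - (2 * L)^-1 * dotv (mxapp (L%:M - H) (u1 - u2)) (grad f u1)
  - (2 * L)^-1 * dotv (mxapp (L%:M + H) (u1 - u2)) (grad f u2)
  - (4 * L)^-1 * enorm (mxapp H (u1 - u2)) ^+ 2
  - L / 4 * enorm (u1 - u2) ^+ 2 <= 0.
Proof.
rewrite dot_mxappB dot_mxappD !enorm_sq.
pose p := 2^-1 *: (u1 - u2) + (2 * L)^-1 *: (grad f u1 - grad f u2).
have K := @keyK R n L (u1 - u2) (grad f u1) (grad f u2) (mxapp H (u1 - u2)) p hL (erefl _).
have A := @descent R n L f u2 (u2 + p) 1 hf hL (expr1n _ _).
have B := @descent R n L f u1 (u2 + p) (-1) hf hL (etrans (sqrrN _) (expr1n _ _)).
clearbody p.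
have zu2 : u2 + p - u2 = p by rewrite addrAC subrr add0r.
have zu1 : u2 + p - u1 = p - (u1 - u2) by rewrite opprB addrAC addrC.
rewrite zu2 in A; rewrite zu1 in B.
exact: (finarith A B K).
Qed.
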